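(* Let $\mathcal{A}=\langle Q,A,E,I,T\rangle$ be a finite automaton over the free monoid $A^*$ and let $\omega$ and $\omega'$ be two total orders on $Q$. Then $$\mathbf{N}\wedge\mathbf{S}\wedge\mathbf{P}\ \vdash\ \mathsf{M}_\omega(\mathcal{A})\equiv\mathsf{M}_{\omega'}(\mathcal{A}),$$ that is, the two expressions produced by the McNaughton–Yamada algorithm for the orders $\omega$ and $\omega'$ can be proved equal using the natural identities $\mathbf{N}$ together with the aperiodic identities $\mathbf{S}$ and $\mathbf{P}$.
   Context: Rational expressions over $A^*$ are the well-formed formulas built from the constants $\mathsf{0}$ and $\mathsf{1}$ and the letters of $A$ by the binary operators $+$ and $\cdot$ and the unary operator ${}^*$. All expressions are taken reduced modulo the trivial identities $\mathsf{E}+\mathsf{0}\equiv\mathsf{E}$, $\mathsf{0}+\mathsf{E}\equiv\mathsf{E}$, $\mathsf{E}\cdot\mathsf{0}\equiv\mathsf{0}$, $\mathsf{0}\cdot\mathsf{E}\equiv\mathsf{0}$, $\mathsf{E}\cdot\mathsf{1}\equiv\mathsf{E}$, $\mathsf{1}\cdot\mathsf{E}\equiv\mathsf{E}$, $\mathsf{0}^*\equiv\mathsf{1}$, and all computations below are performed modulo them. The natural identities $\mathbf{N}$ are associativity of $+$ and of $\cdot$, distributivity of $\cdot$ over $+$ on both sides, and commutativity $\mathsf{E}+\mathsf{F}\equiv\mathsf{F}+\mathsf{E}$. The aperiodic identities are: - $\mathbf{S}$: $(\mathsf{E}+\mathsf{F})^*\equiv\mathsf{E}^*\cdot(\mathsf{F}\cdot\mathsf{E}^*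 )^*$ and $(\mathsf{E}+\mathsf{F})^*\equiv(\mathsf{E}^*\cdot\mathsf{F})^*\cdot\mathsf{E}^*$; - $\mathbf{P}$: $(\mathsf{E}\cdot\mathsf{F})^*\equiv\mathsf{1}+\mathsf{E}\cdot(\mathsf{F}\cdot\mathsf{E})^*\cdot\mathsf{F}$. For a set $\mathcal{I}$ of identities, $\mathcal{I}\vdash\mathsf{X}\equiv\mathsf{Y}$ means that $\mathsf{X}$ and $\mathsf{Y}$ are related by the smallest congruence on expressions (for $+$, $\cdot$ and ${}^*$) that contains all instances of the identities in $\mathcal{I}$, working modulo the trivial identities. McNaughton–Yamada algorithm for the order $\omega$. Identify $Q$ with $\{1,\dots,n\}$ via $\omega$. For $p,q\in Q$, let $\mathsf{E}_{p,q}$ be the sum, written in some fixed order and bracketing, of the letters labelling the transitions from $p$ to $q$; it is $\mathsf{0}$ if there is none. Define: - $\mathsf{M}^{(0)}_{p,q}=\mathsf{E}_{p,q}$; - for $1\le k\le n$, $\mathsf{M}^{(k)}_{p,q}=\mathsf{M}^{(k-1)}_{p,q}+\mathsf{M}^{(k-1)}_{p,k}\cdot(\mathsf{M}^{(k-1)}_{k,k})^*\cdot\mathsf{M}^{(k-1)}_{k,q}$; - $\mathsf{M}_{p,q}=\mathsf{M}^{(n)}_{p,q}$ if $p\neq q$, and $\mathsf{M}_{p,p}=\mathsf{M}^{(n)}_{p,p}+\mathsf{1}$. Then $\mathsf{M}_\omega(\mathcal{A})=\sum_{p\in I,\,q\in T}\mathsf{M}_{p,q}$, the sum being written in some fixed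 order and bracketing. It denotes the language accepted by $\mathcal{A}$. *)

(* Defs.v *)
From mathcomp Require Import all_boot.
Set Implicit Arguments. Unset Strict Implicit. Unset Printing Implicit Defensive.

Inductive rexp (A : Type) : Type :=
| Zero | One | Atom of A
| Plus of rexp A & rexp A
| Dot of rexp A & rexp A
| Star of rexp A.
Arguments Zero {A}. Arguments One {A}.

Section Exprs.
Variable A : Type.

(* Smart constructors: computations modulo the trivial identities. *)
Definition splus (e f : rexp A) : rexp A :=
  match e, f with
  | Zero, _ => f
  | _, Zero => e
  | _, _ => Plus e f
  end.
Definition sdot (e f : rexp A) : rexp A :=
  match e, f with
  | Zero, _ => Zero
  | _, Zero => Zero
  | One, _ => f
  | _, One => e
  | _, _ => Dot e f
  end.
Definition sstar (e : rexp A) : rexp A :=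
  match e with Zero => One | _ => Star e end.

(* N /\ S /\ P |- X == Y : smallest congruence containing all instances of
   N, S, P, taken modulo the trivial identities (which are therefore
   included as generators). *)
Inductive NSP_eq : rexp A -> rexp A -> Prop :=
| ax_refl e : NSP_eq e e
| ax_sym e f : NSP_eq e f -> NSP_eq f e
| ax_trans e f g : NSP_eq e f -> NSP_eq f g -> NSP_eq e g
| ax_plus e e' f f' : NSP_eq e e' -> NSP_eq f f' -> NSP_eq (Plus e f) (Plus e' f')
| ax_dot e e' f f' : NSP_eq e e' -> NSP_eq f f' -> NSP_eq (Dot e f) (Dot e' f')
| ax_star e e' : NSP_eq e e' -> NSP_eq (Star e) (Star e')
| tr_plus0r e : NSP_eq (Plus e Zero) e
| tr_plus0l e : NSP_eq (Plus Zero e) e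
| tr_dot0r e : NSP_eq (Dot e Zero) Zero
| tr_dot0l e : NSP_eq (Dot Zero e) Zero
| tr_dot1r e : NSP_eq (Dot e One) e
| tr_dot1l e : NSP_eq (Dot One e) e
| tr_star0 : NSP_eq (Star Zero) One
| N_plusA e f g : NSP_eq (Plus e (Plus f g)) (Plus (Plus e f) g)
| N_dotA e f g : NSP_eq (Dot e (Dot f g)) (Dot (Dot e f) g)
| N_distl e f g : NSP_eq (Dot e (Plus f g)) (Plus (Dot e f) (Dot e g))
| N_distr e f g : NSP_eq (Dot (Plus e f) g) (Plus (Dot e g) (Dot f g))
| N_plusC e f : NSP_eq (Plus e f) (Plus f e)
| S_l e f : NSP_eq (Star (Plus e f)) (Dot (Star e) (Star (Dot f (Star e))))
| S_r e f : NSP_eq (Star (Plus e f)) (Dot (Star (Dot (Star e) f)) (Star e))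
| P_ax e f : NSP_eq (Star (Dot e f)) (Plus One (Dot (Dot e (Star (Dot f e))) f)).

Definition ssum (l : seq (rexp A)) : rexp A := foldr splus Zero l.

End Exprs.

Section MY.
Variables (Q A : finType).

Record automaton := Automaton {
  trans : Q -> A -> Q -> bool;
  initial : {set Q};
  final : {set Q} }.

Variable aut : automaton.

Definition Elab (p q : Q) : rexp A :=
  ssum [seq Atom a | a <- enum A & trans aut p a q].

Definition MY_step (M : Q -> Q -> rexp A) (k : Q) : Q -> Q -> rexp A :=
  fun p q => splus (M p q) (sdot (sdot (M p k) (sstar (M k k))) (M k q)).

(* A total order r on Q; the identification Q = {1..n} is the
   r-sorted enumeration of Q. *)
Definition total_order (r : rel Q) : Prop :=
  [/\ reflexive r, antisymmetric r, transitive r & total r].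

Definition order_enum (r : rel Q) : seq Q := sort r (enum Q).

Definition Mn (r : rel Q) : Q -> Q -> rexp A :=
  foldl MY_step Elab (order_enum r).

Definition Mpq (r : rel Q) (p q : Q) : rexp A :=
  if p == q then splus (Mn r p p) One else Mn r p q.

Definition MY (r : rel Q) : rexp A :=
  ssum [seq Mpq r pq.1 pq.2 | pq <- [seq (p, q) | p <- enum (initial aut), q <- enum (final aut)]].

End MY.

(* Main.v *)
Require Import Defs.
From mathcomp Require Import all_boot.
From Stdlib Require Import Setoid Morphisms.
Set Implicit Arguments. Unset Strict Implicit. Unset Printing Implicit Defensive.

Notation "x =~ y" := (NSP_eq x y) (at level 70).

Add Parametric Relation (A : Type) : (rexp A) (@NSP_eq A)
  reflexivity proved by (@ax_refl A) symmetry proved by (@ax_sym A)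
  transitivity proved by (@ax_trans A) as NSP_rel.
Add Parametric Morphism (A : Type) : (@Plus A) with signature
  (@NSP_eq A) ==> (@NSP_eq A) ==> (@NSP_eq A) as Plus_mor.
Proof. move=> *; exact: ax_plus. Qed.
Add Parametric Morphism (A : Type) : (@Dot A) with signature
  (@NSP_eq A) ==> (@NSP_eq A) ==> (@NSP_eq A) as Dot_mor.
Proof. move=> *; exact: ax_dot. Qed.
Add Parametric Morphism (A : Type) : (@Star A) with signature
  (@NSP_eq A) ==> (@NSP_eq A) as Star_mor.
Proof. move=> *; exact: ax_star. Qed.

Section Poly.
Variable A : Type.
Inductive pexp := PV of nat | P0 | P1 | PP of pexp & pexp | PD of pexp & pexp.
Variable env : nat -> rexp A.
Fixpoint peval e := match e with
  | PV n => env n | P0 => Zero | P1 => One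
  | PP x y => Plus (peval x) (peval y) | PD x y => Dot (peval x) (peval y) end.
Fixpoint pmul (s1 s2 : seq (seq nat)) := match s1 with
  | [::] => [::] | m :: s => map (cat m) s2 ++ pmul s s2 end.
Fixpoint pnorm e : seq (seq nat) := match e with
  | PV n => [:: [:: n]] | P0 => [::] | P1 => [:: [::]]
  | PP x y => pnorm x ++ pnorm y | PD x y => pmul (pnorm x) (pnorm y) end.
Definition mev (m : seq nat) := foldr (fun n r => Dot (env n) r) One m.
Definition sev (s : seq (seq nat)) := foldr (fun m r => Plus (mev m) r) Zero s.

Lemma plus_swap (x y z : rexp A) : Plus x (Plus y z) =~ Plus y (Plus x z).
Proof.
rewrite N_plusA (N_plusC x y) -N_plusA. reflexivity.
Qed.

Lemma mev_cat m1 m2 : mev (m1 ++ m2) =~ Dot (mev m1) (mev m2).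
Proof.
elim: m1 => [|n m1 IH] /=; first by rewrite tr_dot1l; reflexivity.
by rewrite IH N_dotA; reflexivity.
Qed.

Lemma sev_cat s1 s2 : sev (s1 ++ s2) =~ Plus (sev s1) (sev s2).
Proof.
elim: s1 => [|m s1 IH] /=; first by rewrite tr_plus0l; reflexivity.
by rewrite IH N_plusA; reflexivity.
Qed.

Lemma sev_mapcat m s : sev (map (cat m) s) =~ Dot (mev m) (sev s).
Proof.
elim: s => [|m2 s IH] /=; first by rewrite tr_dot0r; reflexivity.
by rewrite IH mev_cat N_distl; reflexivity.
Qed.

Lemma sev_pmul s1 s2 : sev (pmul s1 s2) =~ Dot (sev s1) (sev s2).
Proof.
elim: s1 => [|m s1 IH] /=; first by rewrite tr_dot0l; reflexivity.
by rewrite sev_cat IH sev_mapcat N_distr; reflexivity.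
Qed.

Lemma peval_norm e : peval e =~ sev (pnorm e).
Proof.
elim: e => [n||| x IHx y IHy | x IHx y IHy] /=.
- by rewrite tr_plus0r tr_dot1r; reflexivity.
- reflexivity.
- by rewrite tr_plus0r; reflexivity.
- by rewrite sev_cat IHx IHy; reflexivity.
- by rewrite sev_pmul IHx IHy; reflexivity.
Qed.

Lemma sev_insert t1 m t2 : sev (t1 ++ m :: t2) =~ Plus (mev m) (sev (t1 ++ t2)).
Proof.
elim: t1 => [|x t1 IH] /=; first reflexivity.
by rewrite IH plus_swap; reflexivity.
Qed.

Lemma sev_perm s t : perm_eq s t -> sev s =~ sev t.
Proof.
elim: s t => [|m s IH] t Hst.
  by move: Hst; rewrite perm_sym => /perm_nilP ->; reflexivity.
have mt : m \in t by rewrite -(perm_mem Hst) mem_head.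
move: Hst; case/splitPr: mt => t1 t2 Hst.
have Hs' : perm_eq s (t1 ++ t2).
  rewrite -(perm_cons m); apply: (perm_trans Hst).
  by rewrite (perm_catCA t1 [:: m] t2).
by rewrite sev_insert /= (IH _ Hs'); reflexivity.
Qed.

Lemma pnorm_sound e1 e2 : perm_eq (pnorm e1) (pnorm e2) -> peval e1 =~ peval e2.
Proof.
by move=> H; rewrite !peval_norm (sev_perm H); reflexivity.
Qed.
End Poly.

Ltac inl x l := lazymatch l with
  | x :: _ => constr:(true)
  | _ :: ?l' => inl x l'
  | _ => constr:(false) end.
Ltac reify_env t l := lazymatch t with
  | Plus ?x ?y => let l1 := reify_env x l in reify_env y l1
  | Dot ?x ?y => let l1 := reify_env x l in reify_env y l1
  | Zero => l | One => l
  | _ => let b := inl t l in lazymatch b with true => l | false => constr:(t :: l) end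
  end.
Ltac lookup x l := lazymatch l with
  | x :: _ => constr:(0)
  | _ :: ?l' => let n := lookup x l' in constr:(S n) end.
Ltac reify t l := lazymatch t with
  | Plus ?x ?y => let a := reify x l in let b := reify y l in constr:(PP a b)
  | Dot ?x ?y => let a := reify x l in let b := reify y l in constr:(PD a b)
  | Zero => constr:(P0) | One => constr:(P1)
  | _ => let n := lookup t l in constr:(PV n) end.
Ltac poly := lazymatch goal with |- @NSP_eq ?A ?x ?y =>
  let l0 := reify_env x (@nil (rexp A)) in
  let l := reify_env y l0 in
  let ex := reify x l in let ey := reify y l in
  change (@NSP_eq A (peval (fun n => nth Zero l n) ex) (peval (fun n => nth Zero l n) ey));
  apply: pnorm_sound; vm_compute; reflexivity end.

Section Stars.
Variable A : Type.
Implicit Types a b c d e f : rexp A.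

Lemma star_unfl e : Star e =~ Plus One (Dot e (Star e)).
Proof.
have H := P_ax e One.
rewrite tr_dot1r tr_dot1l tr_dot1r in H. exact H.
Qed.

Lemma star_unfr e : Star e =~ Plus One (Dot (Star e) e).
Proof.
have H := P_ax One e.
rewrite tr_dot1l tr_dot1r tr_dot1l in H. exact H.
Qed.

Lemma slide e f : Dot (Star (Dot e f)) e =~ Dot e (Star (Dot f e)).
Proof.
rewrite {1}(P_ax e f).
transitivity (Dot e (Plus One (Dot (Star (Dot f e)) (Dot f e)))); first by poly.
by rewrite -star_unfr; reflexivity.
Qed.

Lemma starL a b c d : Star (Plus a (Dot (Dot b (Star d)) c)) =~
  Plus (Star a) (Dot (Dot (Dot (Dot (Star a) b)
     (Star (Plus d (Dot (Dot c (Star a)) b)))) c) (Star a)).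
Proof.
rewrite S_l.
have E1 : Star (Dot (Dot (Dot b (Star d)) c) (Star a)) =~
          Star (Dot b (Dot (Star d) (Dot c (Star a)))) by apply: ax_star; poly.
rewrite E1 P_ax.
have E2 : Star (Dot (Dot (Star d) (Dot c (Star a))) b) =~
          Star (Dot (Star d) (Dot (Dot c (Star a)) b)) by apply: ax_star; poly.
rewrite E2.
rewrite (S_r d (Dot (Dot c (Star a)) b)).
poly.
Qed.

Lemma E3 a b c d : Star (Dot (Star d) (Dot (Dot c (Star a)) b)) =~
   Star (Dot (Dot (Dot (Star d) c) (Star a)) b).
Proof. by apply: ax_star; poly. Qed.
Lemma E4 a b c d : Star (Dot (Dot (Dot b (Star d)) c) (Star a)) =~
   Star (Dot b (Dot (Dot (Star d) c) (Star a))).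
Proof. by apply: ax_star; poly. Qed.

Lemma starW a b c d :
  Dot (Dot (Star (Plus d (Dot (Dot c (Star a)) b))) c) (Star a) =~
  Dot (Dot (Star d) c) (Star (Plus a (Dot (Dot b (Star d)) c))).
Proof.
rewrite (S_r d) (S_l a) E3 E4.
transitivity (Dot (Star (Dot (Dot (Dot (Star d) c) (Star a)) b)) (Dot (Dot (Star d) c) (Star a))); first by poly.
rewrite slide; poly.
Qed.

Lemma starZ a b c d :
  Dot (Dot (Star a) b) (Star (Plus d (Dot (Dot c (Star a)) b))) =~
  Dot (Dot (Star (Plus a (Dot (Dot b (Star d)) c))) b) (Star d).
Proof.
rewrite (S_r d) (S_l a) E3 E4.
symmetry.
transitivity (Dot (Star a) (Dot (Dot (Star (Dot b (Dot (Dot (Star d) c) (Star a)))) b) (Star d))); first by poly.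
rewrite slide; poly.
Qed.

Definition Form R P1 P2 Q1 Q2 U V W Z : rexp A :=
  Plus R (Plus (Dot (Dot P1 U) Q1) (Plus (Dot (Dot P2 V) Q2)
     (Plus (Dot (Dot P2 W) Q1) (Dot (Dot P1 Z) Q2)))).

Lemma core R P1 P2 Q1 Q2 a b c d :
 Plus (Plus R (Dot (Dot P1 (Star a)) Q1))
   (Dot (Dot (Plus P2 (Dot (Dot P1 (Star a)) b)) (Star (Plus d (Dot (Dot c (Star a)) b))))
        (Plus Q2 (Dot (Dot c (Star a)) Q1)))
 =~ Plus (Plus R (Dot (Dot P2 (Star d)) Q2))
   (Dot (Dot (Plus P1 (Dot (Dot P2 (Star d)) c)) (Star (Plus a (Dot (Dot b (Star d)) c))))
        (Plus Q1 (Dot (Dot b (Star d)) Q2))).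
Proof.
set as' := Star a. set ds := Star d.
set D := Star (Plus d (Dot (Dot c as') b)).
set A' := Star (Plus a (Dot (Dot b ds) c)).
transitivity (Form R P1 P2 Q1 Q2 (Plus as' (Dot (Dot (Dot (Dot as' b) D) c) as'))
   D (Dot (Dot D c) as') (Dot (Dot as' b) D)).
  rewrite /Form; poly.
transitivity (Form R P1 P2 Q1 Q2 A' (Plus ds (Dot (Dot (Dot (Dot ds c) A') b) ds))
   (Dot (Dot ds c) A') (Dot (Dot A' b) ds)); last by rewrite /Form; poly.
rewrite /Form /as' /ds /D /A' -(starL a b c d) -(starL d c b a) (starW a b c d) (starZ a b c d).
reflexivity.
Qed.
End Stars.

Section Mat.
Variables (Q : eqType) (A : Type).
Definition raw_step (M : Q -> Q -> rexp A) (k : Q) : Q -> Q -> rexp A :=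
  fun p q => Plus (M p q) (Dot (Dot (M p k) (Star (M k k))) (M k q)).
Definition meq (M N : Q -> Q -> rexp A) := forall p q, M p q =~ N p q.

Lemma raw_meq M N k : meq M N -> meq (raw_step M k) (raw_step N k).
Proof. move=> H p q; rewrite /raw_step !H; reflexivity. Qed.

Lemma swap_raw M k l : meq (raw_step (raw_step M k) l) (raw_step (raw_step M l) k).
Proof. move=> p q; exact: core. Qed.

Lemma fold_raw_meq s M N : meq M N -> meq (foldl raw_step M s) (foldl raw_step N s).
Proof. elim: s M N => [|k s IH] M N H //=; apply: IH; exact: raw_meq. Qed.

Lemma fold_insert t1 a t2 M :
  meq (foldl raw_step M (t1 ++ a :: t2)) (foldl raw_step M (a :: t1 ++ t2)).
Proof.
elim: t1 M => [|b t1 IH] M /=; first by move=> p q; reflexivity.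
move=> p q; apply: ax_trans (IH _ p q) _ => /=.
apply: fold_raw_meq; exact: swap_raw.
Qed.

Lemma fold_perm s t M : perm_eq s t -> meq (foldl raw_step M s) (foldl raw_step M t).
Proof.
elim: s t M => [|m s IH] t M Hst.
  by move: Hst; rewrite perm_sym => /perm_nilP -> p q; reflexivity.
have mt : m \in t by rewrite -(perm_mem Hst) mem_head.
move: Hst; case/splitPr: mt => t1 t2 Hst.
have Hs' : perm_eq s (t1 ++ t2).
  rewrite -(perm_cons m); apply: (perm_trans Hst).
  by rewrite (perm_catCA t1 [:: m] t2).
move=> p q; apply: ax_trans (IH _ (raw_step M m) Hs' p q) _.
apply: ax_sym; exact: fold_insert.
Qed.
End Mat.

Lemma splus_eq (A : Type) (e f : rexp A) : splus e f =~ Plus e f.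
Proof.
case: e => [||x|x y|x y|x]; case: f => [||u|u v|u v|u] /=;
  try reflexivity; try (symmetry; apply: tr_plus0l); symmetry; apply: tr_plus0r.
Qed.
Lemma sdot_eq (A : Type) (e f : rexp A) : sdot e f =~ Dot e f.
Proof.
case: e => [||x|x y|x y|x]; case: f => [||u|u v|u v|u] /=;
  try reflexivity; try (symmetry; apply: tr_dot0l); try (symmetry; apply: tr_dot0r);
  try (symmetry; apply: tr_dot1l); symmetry; apply: tr_dot1r.
Qed.
Lemma sstar_eq (A : Type) (e : rexp A) : sstar e =~ Star e.
Proof. case: e => /=; try reflexivity; symmetry; apply: tr_star0. Qed.

Lemma fold_MY (Q A : finType) s (M N : Q -> Q -> rexp A) :
  meq M N -> meq (foldl (@MY_step Q A) M s) (foldl (@raw_step Q A) N s).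
Proof.
elim: s M N => [|k s IH] M N H //=; apply: IH => p q.
by rewrite /MY_step /raw_step splus_eq !sdot_eq sstar_eq !H; reflexivity.
Qed.

Lemma ssum_map (A : Type) (T : Type) (f g : T -> rexp A) (l : seq T) :
  (forall x, f x =~ g x) -> ssum (map f l) =~ ssum (map g l).
Proof.
move=> H; elim: l => [|x l IH] /=; first reflexivity.
by rewrite !splus_eq IH H; reflexivity.
Qed.

Theorem corollary3p10 (Q A : finType) (aut : automaton Q A) (w w' : rel Q) :
  total_order w -> total_order w' ->
  NSP_eq (MY aut w) (MY aut w').
Proof.
move=> _ _.
have HM : meq (Mn aut w) (Mn aut w').
  move=> p q; rewrite /Mn.
  apply: ax_trans (fold_MY (order_enum w) (fun p q => ax_refl (Elab aut p q)) p q) _.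
  apply: ax_trans _ (ax_sym (fold_MY (order_enum w') (fun p q => ax_refl (Elab aut p q)) p q)).
  apply: fold_perm.
  by rewrite /order_enum (perm_sort w) perm_sym (perm_sort w').
rewrite /MY; apply: ssum_map => pq; rewrite /Mpq.
case: (_ == _); last exact: HM.
by rewrite !splus_eq HM; reflexivity.
Qed.
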